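(* Consider a mean-variance team stochastic game as described in the context and a joint policy $\boldsymbol{\mu}^*\in\mathcal{U}$. Then $\boldsymbol{\mu}^*$ is a strict local Nash equilibrium if and only if it is a strict local maximum of $J$, i.e. there exists $\bar\delta\in(0,1]$ such that for all $\delta\in(0,\bar\delta]$ and all $\boldsymbol{\mu}=(\mu_1,\dots,\mu_N)\in\mathcal{U}$ with $\boldsymbol{\mu}\neq\boldsymbol{\mu}^*$, $$J(\boldsymbol{\mu}^* )>J\big((1-\delta)\mu_1^*+\delta\mu_1,\dots,(1-\delta)\mu_N^*+\delta\mu_N\big).$$
   Context: Game: finite agents $\mathcal{N}=\{1,\dots,N\}$, finite state space $\mathcal{S}$, finite action sets $\mathcal{A}_i$, $\mathcal{A}=\prod_i\mathcal{A}_i$, transition kernel $P(s'|s,\boldsymbol{a})$, common reward $r:\mathcal{S}\times\mathcal{A}\to\mathbb{R}$. Policies $\mu_i:\mathcal{S}\to\Delta(\mathcal{A}_i)$ (set $\mathcal{U}_i$); joint policies $\boldsymbol{\mu}\in\mathcal{U}=\prod_i\mathcal{U}_i$ with $\boldsymbol{\mu}(\boldsymbol{a}|s)=\prod_i\mu_i(a_i|s)$; $(\mu_i,\boldsymbol{\mu}_{-i})$ means agent $i$ uses $\mu_i$, others use $\boldsymbol{\mu}_{-i}$; $(1-\delta)\mu^*_i+\delta\mu_i$ is the policy $s\mapsto(1-\delta)\mu^*_i(\cdot|s)+\delta\mu_i(\cdot|s)$. Standing assumption: the chain $P^{\boldsymbol{\mu}}(s'|s)=\sum_{\boldsymbol{a}}\boldsymbol{\mu}(\boldsymbol{a}|s)P(s'|s,\boldsymbol{a})$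 is ergodic for every $\boldsymbol{\mu}\in\mathcal{U}$, stationary distribution $\pi^{\boldsymbol{\mu}}$. $\eta(\boldsymbol{\mu})=\sum_s\pi^{\boldsymbol{\mu}}(s)\sum_{\boldsymbol{a}}\boldsymbol{\mu}(\boldsymbol{a}|s)r(s,\boldsymbol{a})$; $\zeta(\boldsymbol{\mu})=\sum_s\pi^{\boldsymbol{\mu}}(s)\sum_{\boldsymbol{a}}\boldsymbol{\mu}(\boldsymbol{a}|s)(r(s,\boldsymbol{a})-\eta(\boldsymbol{\mu}))^2$; for fixed $\beta\ge0$, $J(\boldsymbol{\mu})=\eta(\boldsymbol{\mu})-\beta\zeta(\boldsymbol{\mu})$. A joint policy $\boldsymbol{\mu}^*$ is a strict local Nash equilibrium if there is $\bar\delta\in(0,1]$ such that for all $\delta\in(0,\bar\delta]$, all $i\in\mathcal{N}$ and all $\mu_i\in\mathcal{U}_i$ with $\mu_i\neq\mu_i^*$: $J(\mu_i^*,\boldsymbol{\mu}^*_{-i})>J((1-\delta)\mu_i^*+\delta\mu_i,\boldsymbol{\mu}^*_{-i})$. *)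

(* Defs.v *)
From HB Require Import structures.
From mathcomp Require Import all_boot all_order all_algebra.
Set Implicit Arguments. Unset Strict Implicit. Unset Printing Implicit Defensive.
Import Order.TTheory GRing.Theory Num.Theory.
Local Open Scope ring_scope.

Section Game.
Variable R : realFieldType.
Variable N : nat.
Variable S : finType.
Variable A : 'I_N -> finType.

Definition jact := {dffun forall i : 'I_N, A i}.

Definition pol (i : 'I_N) := {ffun S -> {ffun A i -> R}}.
Definition jpol := {dffun forall i : 'I_N, pol i}.

Definition is_policy (i : 'I_N) (m : pol i) : Prop :=
  (forall s a, 0 <= m s a) /\ (forall s, \sum_(a : A i) m s a = 1).
Definition is_jpolicy (mu : jpol) : Prop := forall i, is_policy (mu i).

Definition is_kernel (P : S -> jact -> S -> R) : Prop :=
  (forall s a s', 0 <= P s a s') /\ (forall s a, \sum_(s' : S) P s a s' = 1).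

Definition jprob (mu : jpol) (s : S) (a : jact) : R := \prod_(i < N) mu i s (a i).

Definition chain (P : S -> jact -> S -> R) (mu : jpol) (s s' : S) : R :=
  \sum_(a : jact) jprob mu s a * P s a s'.

Fixpoint nstep (P : S -> jact -> S -> R) (mu : jpol) (n : nat) (s s' : S) : R :=
  match n with
  | O => (s == s')%:R
  | n'.+1 => \sum_(t : S) nstep P mu n' s t * chain P mu t s'
  end.

(* ergodic finite chain (irreducible and aperiodic, i.e. regular):
   some power of the transition matrix is entrywise positive *)
Definition ergodic (P : S -> jact -> S -> R) (mu : jpol) : Prop :=
  exists n : nat, forall s s', 0 < nstep P mu n s s'.

Definition is_stationary (P : S -> jact -> S -> R) (mu : jpol) (pi : S -> R) : Prop :=
  [/\ forall s, 0 <= pi s, \sum_(s : S) pi s = 1 &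
      forall s', \sum_(s : S) pi s * chain P mu s s' = pi s'].

(* pi : jpol -> S -> R is meant to be mu |-> pi^mu *)
Definition eta (r : S -> jact -> R) (pi : jpol -> S -> R) (mu : jpol) : R :=
  \sum_(s : S) pi mu s * \sum_(a : jact) jprob mu s a * r s a.

Definition zeta (r : S -> jact -> R) (pi : jpol -> S -> R) (mu : jpol) : R :=
  \sum_(s : S) pi mu s * \sum_(a : jact) jprob mu s a * (r s a - eta r pi mu) ^+ 2.

Definition Jmv (beta : R) (r : S -> jact -> R) (pi : jpol -> S -> R) (mu : jpol) : R :=
  eta r pi mu - beta * zeta r pi mu.

Definition mix1 (i : 'I_N) (delta : R) (ms m : pol i) : pol i :=
  [ffun s => [ffun a => (1 - delta) * ms s a + delta * m s a]].

Definition mixj (delta : R) (mus mu : jpol) : jpol :=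
  [ffun i => mix1 delta (mus i) (mu i)].

Definition upd (mu : jpol) (i : 'I_N) (m : pol i) : jpol :=
  [ffun j => dfwith (fun k => mu k) m j].

Definition strict_local_NE (beta : R) (r : S -> jact -> R) (pi : jpol -> S -> R)
    (mus : jpol) : Prop :=
  exists2 dbar : R, 0 < dbar <= 1 &
    forall delta : R, 0 < delta <= dbar ->
    forall (i : 'I_N) (m : pol i), is_policy m -> m <> mus i ->
      Jmv beta r pi mus > Jmv beta r pi (upd mus (mix1 delta (mus i) m)).

Definition strict_local_max (beta : R) (r : S -> jact -> R) (pi : jpol -> S -> R)
    (mus : jpol) : Prop :=
  exists2 dbar : R, 0 < dbar <= 1 &
    forall delta : R, 0 < delta <= dbar ->
    forall mu : jpol, is_jpolicy mu -> mu <> mus ->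
      Jmv beta r pi mus > Jmv beta r pi (mixj delta mus mu).

End Game.

(* Main.v *)
Require Import Defs.
From HB Require Import structures.
From mathcomp Require Import all_boot all_order all_algebra zify ring lra.
Import Order.TTheory GRing.Theory Num.Theory.
Local Open Scope ring_scope.
Set Implicit Arguments. Unset Strict Implicit.

Lemma sum_prod_dffun (R : realFieldType) (N : nat) (A : 'I_N -> finType)
  (F : forall i, A i -> R) :
  \sum_(a : {dffun forall i : 'I_N, A i}) \prod_i F i (a i) = \prod_i \sum_(c : A i) F i c.
Proof.
pose G i : {ffun A i -> R} := [ffun c => F i c].
transitivity (\sum_(a : {dffun forall i : 'I_N, A i}) \prod_i G i (a i)).
  by apply: eq_bigr => a _; apply: eq_bigr => i _; rewrite ffunE.
rewrite (reindex (@dffun_of_fprod _ A)); last exact/onW_bij/dffun_of_fprod_bij.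
have -> : \sum_(t : fprod A) \prod_i G i (dffun_of_fprod t i)
   = \sum_(t : fprod A) \prod_(i in 'I_N) G i (t i).
  by apply: eq_bigr => t _; apply: eq_bigr => i _; rewrite /dffun_of_fprod ffunE.
rewrite big_fprod /=.
rewrite -(bigA_distr_big_dep _ (fun i j => untag 0 (G i) j)).
apply: eq_bigr => i _.
transitivity (\sum_(c : A i) G i c); last by apply: eq_bigr => c _; rewrite ffunE.
by rewrite (big_tag (fun i c => G i c) i).
Qed.

Lemma sum_enum_val (R : realFieldType) (S : finType) (F : S -> R) :
  \sum_(i < #|S|) F (enum_val i) = \sum_s F s.
Proof. rewrite -(big_enum_val (A := S)). by apply: eq_bigl. Qed.

Lemma poisson_gen (R : realFieldType) (S : finType) (Q : S -> S -> R) (pi : S -> R) :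
  (forall u : S -> R, (forall s, u s = \sum_t Q s t * u t) -> forall s t, u s = u t) ->
  (forall t, \sum_s pi s * Q s t = pi t) -> (exists s, pi s != 0) ->
  forall g : S -> R, \sum_s pi s * g s = 0 ->
  exists v : S -> R, forall s, v s = g s + \sum_t Q s t * v t.
Proof.
move=> harm stat [s0 hs0] g hg.
pose n := #|S|.
pose ev (i : 'I_n) : S := enum_val i.
have evK : forall s, ev (enum_rank s) = s by move=> s; exact: enum_rankK.
have sumev : forall F : S -> R, \sum_(i < n) F (ev i) = \sum_s F s.
  by move=> F; exact: sum_enum_val.
pose B : 'M[R]_n := \matrix_(i, j) ((i == j)%:R - Q (ev j) (ev i)).
pose pc : 'M[R]_(n, 1) := \matrix_(i, k) pi (ev i).
pose gr : 'M[R]_(1, n) := \matrix_(k, j) g (ev j).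
have Bk : (B <= kermx pc)%MS.
  rewrite sub_kermx; apply/eqP/matrixP => j k; rewrite !mxE.
  under eq_bigr do rewrite !mxE mulrBl.
  rewrite sumrB (bigD1 j) //= eqxx mul1r big1 ?addr0; last first.
    by move=> i /negbTE; rewrite eq_sym => ->; rewrite mul0r.
  rewrite (sumev (fun s => Q s (ev j) * pi s)).
  by rewrite -{1}(stat (ev j)); under eq_bigr do rewrite mulrC; rewrite subrr.
have gk : (gr <= kermx pc)%MS.
  rewrite sub_kermx; apply/eqP/matrixP => j k; rewrite !mxE.
  under eq_bigr do rewrite !mxE.
  by rewrite (sumev (fun s => g s * pi s)); under eq_bigr do rewrite mulrC.
have rpc : \rank pc = 1%N.
  apply/eqP; rewrite eqn_leq rank_leq_col lt0n mxrank_eq0.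
  apply/eqP => /matrixP /(_ (enum_rank s0) 0); rewrite !mxE evK => h.
  by move: hs0; rewrite h eqxx.
have rkB : (n - 1 <= \rank B)%N.
  have : (\rank (kermx B) <= 1)%N.
    have sub : (kermx B <= (const_mx 1 : 'M[R]_(1, n)))%MS.
      apply/row_subP => i.
      move: (row i (kermx B)) (row_sub i (kermx B)) => u hu.
      have uB : u *m B = 0.
        by apply/eqP; rewrite -sub_kermx.
      pose w (s : S) := u 0 (enum_rank s).
      have hw : forall s, w s = \sum_t Q s t * w t.
        move=> s; move/matrixP: uB => /(_ 0 (enum_rank s)); rewrite !mxE.
        under eq_bigr do rewrite !mxE mulrBr.
        rewrite sumrB (bigD1 (enum_rank s)) //= eqxx mulr1 big1 ?addr0; last first.
          by move=> i' /negbTE ->; rewrite mulr0.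
        move/eqP; rewrite subr_eq0 => /eqP; rewrite {1}/w => ->.
        rewrite -(sumev (fun t => Q s t * w t)); apply: eq_bigr => i' _.
        by rewrite /w evK mulrC /ev enum_valK.
      have -> : u = (u 0 i) *: const_mx 1.
        apply/matrixP => k j; rewrite !mxE mulr1 (ord1 k).
        have := harm w hw (ev j) (ev i); rewrite /w !enum_valK.
        done.
      by apply: scalemx_sub.
    move/mxrankS: sub => h; apply: leq_trans h _; exact: rank_leq_row.
  rewrite mxrank_ker => h.
  have := rank_leq_row B; lia.
have kpc : (kermx pc <= B)%MS.
  rewrite -(mxrank_leqif_sup Bk).2 eqn_leq (mxrankS Bk) /= mxrank_ker rpc.
  exact: rkB.
have gB : (gr <= B)%MS by apply: submx_trans gk kpc.
have [vr hv] : exists vr : 'M[R]_(1, n), vr *m B = gr.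
  by exists (gr *m pinvmx B); exact: mulmxKpV gB.
exists (fun s => vr 0 (enum_rank s)) => s.
move/matrixP: hv => /(_ 0 (enum_rank s)); rewrite !mxE.
under eq_bigr do rewrite !mxE mulrBr.
rewrite sumrB (bigD1 (enum_rank s)) //= eqxx mulr1 big1 ?addr0; last first.
  by move=> i' /negbTE ->; rewrite mulr0.
rewrite evK => /eqP; rewrite subr_eq => /eqP ->; congr (_ + _).
rewrite -(sumev (fun t => Q s t * vr 0 (enum_rank t))); apply: eq_bigr => i' _.
by rewrite /ev enum_valK mulrC.
Qed.

Lemma prod_ind (R : realFieldType) (I : finType) (P B : pred I) :
  \prod_(i | P i) ((B i)%:R : R) = ([forall i, P i ==> B i])%:R.
Proof.
case: forallP => h.
  by apply: big1 => i hi; move: (h i); rewrite hi /= => ->.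
have [i hi] : exists i, ~~ (P i ==> B i).
  apply/existsP; apply: contraT; rewrite negb_exists => /forallP h2.
  by exfalso; apply: h => i; move: (h2 i); rewrite negbK.
move: hi; rewrite negb_imply => /andP [hP hB].
by rewrite (bigD1 i) //= (negbTE hB) mul0r.
Qed.

Lemma prod_if1 (R : realFieldType) (N : nat) (x : 'I_N -> R) k :
  \prod_m (if m == k then x m else 1) = x k.
Proof.
rewrite (bigD1 k) //= eqxx big1 ?mulr1 // => m /negbTE ->. done.
Qed.

Lemma dffun_eqE (N : nat) (A : 'I_N -> finType) (a b : {dffun forall i : 'I_N, A i}) :
  [forall k, a k == b k] = (a == b).
Proof.
apply/forallP/eqP => [h|-> k //]; apply/ffunP => k; exact/eqP.
Qed.

Section Basics.
Variables (R : realFieldType) (N : nat) (S : finType) (A : 'I_N -> finType).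
Variable (P : S -> jact A -> S -> R).
Hypothesis HP : is_kernel P.

Lemma jprob_ge0 (mu : jpol R S A) : is_jpolicy mu -> forall s a, 0 <= jprob mu s a.
Proof. by move=> hmu s a; apply: prodr_ge0 => i _; case: (hmu i). Qed.

Lemma sum_jprob (mu : jpol R S A) : is_jpolicy mu -> forall s, \sum_a jprob mu s a = 1.
Proof.
move=> hmu s; rewrite /jprob (sum_prod_dffun (fun i c => mu i s c)).
by apply: big1 => i _; case: (hmu i).
Qed.

Lemma chain_ge0 mu : is_jpolicy mu -> forall s t, 0 <= chain P mu s t.
Proof.
move=> hmu s t; apply: sumr_ge0 => a _; apply: mulr_ge0; first exact: jprob_ge0.
by case: HP.
Qed.

Lemma sum_chain mu : is_jpolicy mu -> forall s, \sum_t chain P mu s t = 1.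
Proof.
move=> hmu s; rewrite /chain exchange_big /=.
rewrite -(sum_jprob hmu s); apply: eq_bigr => a _.
by rewrite -mulr_sumr; case: HP => _ ->; rewrite mulr1.
Qed.

Lemma nstep_ge0 mu : is_jpolicy mu -> forall n s t, 0 <= nstep P mu n s t.
Proof.
move=> hmu; elim=> [|n IH] s t /=; first by rewrite ler0n.
by apply: sumr_ge0 => w _; apply: mulr_ge0; [exact: IH | exact: chain_ge0].
Qed.

Lemma nstep_harm mu (u : S -> R) : (forall s, u s = \sum_t chain P mu s t * u t) ->
  forall n s, u s = \sum_t nstep P mu n s t * u t.
Proof.
move=> hu; elim=> [|n IH] s /=.
  rewrite (bigD1 s) //= eqxx mul1r big1 ?addr0 // => t /negbTE.
  by rewrite eq_sym => ->; rewrite mul0r.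
rewrite (IH s).
under [RHS]eq_bigr do rewrite mulr_suml.
rewrite exchange_big /=; apply: eq_bigr => w _.
by rewrite (hu w) mulr_sumr; apply: eq_bigr => t _; rewrite mulrA.
Qed.

Lemma nstep_sum1 mu : is_jpolicy mu -> forall n s, \sum_t nstep P mu n s t = 1.
Proof.
move=> hmu n s.
transitivity (\sum_t nstep P mu n s t * 1); first by apply: eq_bigr => t _; rewrite mulr1.
rewrite -(@nstep_harm mu (fun _ => 1)) // => s'.
by rewrite -{1}(sum_chain hmu s'); apply: eq_bigr => t _; rewrite mulr1.
Qed.

Lemma nstep_stat mu (p : S -> R) : (forall t, \sum_s p s * chain P mu s t = p t) ->
  forall n t, \sum_s p s * nstep P mu n s t = p t.
Proof.
move=> hp; elim=> [|n IH] t /=.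
  rewrite (bigD1 t) //= eqxx mulr1 big1 ?addr0 // => s /negbTE ->.
  by rewrite mulr0.
under eq_bigr do rewrite mulr_sumr.
rewrite exchange_big /= -{1}(hp t); apply: eq_bigr => w _.
by rewrite -(IH w) mulr_suml; apply: eq_bigr => s _; rewrite mulrA.
Qed.

Lemma stat_pos mu (p : S -> R) : is_jpolicy mu -> ergodic P mu -> is_stationary P mu p ->
  forall s, 0 < p s.
Proof.
move=> hmu [n hn] [p0 p1 ps] t.
rewrite -(nstep_stat ps n t) lt_def sumr_ge0 ?andbT; last first.
  by move=> s _; apply: mulr_ge0 => //; exact: nstep_ge0.
apply/eqP => h0.
have h : forall s, p s = 0.
  move=> s; have := psumr_eq0P (fun s _ => mulr_ge0 (p0 s) (nstep_ge0 hmu n s t)) h0.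
  move=> /(_ s isT) /eqP; rewrite mulf_eq0 (gt_eqF (hn s t)) orbF => /eqP //.
by move: p1; rewrite big1 // => /eqP; rewrite eq_sym oner_eq0.
Qed.

Lemma harm_const mu : is_jpolicy mu -> ergodic P mu ->
  forall u : S -> R, (forall s, u s = \sum_t chain P mu s t * u t) -> forall s t, u s = u t.
Proof.
move=> hmu [n hn] u hu s t.
pose s0 := Order.arg_max s predT u.
have hmax : forall x, u x <= u s0.
  by rewrite /s0; case: (@arg_maxP _ _ _ s predT u) => // m _ hm x; apply: hm.
have h0 : forall x, u x = u s0.
  have e := nstep_harm hu n s0.
  have : \sum_x nstep P mu n s0 x * (u s0 - u x) = 0.
    under eq_bigr do rewrite mulrBr.
    by rewrite sumrB -e -mulr_suml nstep_sum1 // mul1r subrr.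
  have hge : forall y, 0 <= u s0 - u y by move=> y; rewrite subr_ge0.
  move=> hz x; have := psumr_eq0P (fun y _ => mulr_ge0 (nstep_ge0 hmu n s0 y) (hge y)) hz.
  by move=> /(_ x isT) /eqP; rewrite mulf_eq0 (gt_eqF (hn s0 x)) /= subr_eq0 => /eqP ->.
by rewrite !h0.
Qed.


Lemma chain_sum mu s (v : S -> R) :
  \sum_t chain P mu s t * v t = \sum_a jprob mu s a * \sum_t P s a t * v t.
Proof.
rewrite /chain; under eq_bigr do rewrite mulr_suml.
rewrite exchange_big /=; apply: eq_bigr => a _; rewrite mulr_sumr.
by apply: eq_bigr => t _; rewrite mulrA.
Qed.

Variable pi : jpol R S A -> S -> R.
Hypothesis herg : forall mu, is_jpolicy mu -> ergodic P mu.
Hypothesis hstat : forall mu, is_jpolicy mu -> is_stationary P mu (pi mu).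

Lemma perf_repr (mus : jpol R S A) (f : S -> jact A -> R) : is_jpolicy mus ->
  exists Q : S -> jact A -> R, forall mu : jpol R S A, is_jpolicy mu ->
    Defs.eta f pi mu - Defs.eta f pi mus =
    \sum_s pi mu s * \sum_a (jprob mu s a - jprob mus s a) * Q s a.
Proof.
move=> hmus.
have [p0 p1 ps] := hstat hmus.
pose e := Defs.eta f pi mus.
pose g s := \sum_a jprob mus s a * f s a - e.
have hg : \sum_s pi mus s * g s = 0.
  under eq_bigr do rewrite mulrBr.
  by rewrite sumrB -mulr_suml p1 mul1r subrr.
have hne : exists s, pi mus s != 0.
  case: (pickP (fun s => pi mus s != 0)) => [s hs|h]; first by exists s.
  have : \sum_s pi mus s = 0 by apply: big1 => s _; move: (h s) => /negbFE /eqP.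
  by rewrite p1 => /eqP; rewrite oner_eq0.
have [v hv] := poisson_gen (harm_const hmus (herg hmus)) ps hne hg.
exists (fun s a => f s a + \sum_t P s a t * v t) => mu hmu.
have [q0 q1 qs] := hstat hmu.
have h1 : forall s, \sum_a (jprob mu s a - jprob mus s a) * (f s a + \sum_t P s a t * v t)
   = (\sum_a jprob mu s a * f s a + \sum_t chain P mu s t * v t) - (v s + e).
  move=> s; under eq_bigr do rewrite mulrBl.
  rewrite sumrB; congr (_ - _).
    by rewrite chain_sum -big_split /=; apply: eq_bigr => a _; rewrite mulrDr.
  rewrite [in RHS]hv /g chain_sum addrAC subrK -big_split /=.
  by apply: eq_bigr => a _; rewrite mulrDr.
under eq_bigr do rewrite h1.
under eq_bigr do rewrite mulrBr mulrDr mulrDr.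
rewrite sumrB big_split big_split /=.
rewrite -/(Defs.eta f pi mu).
have -> : \sum_s pi mu s * \sum_t chain P mu s t * v t = \sum_t pi mu t * v t.
  under eq_bigr do rewrite mulr_sumr.
  rewrite exchange_big /=; apply: eq_bigr => t _.
  by rewrite -(qs t) mulr_suml; apply: eq_bigr => s _; rewrite mulrA.
rewrite -mulr_suml q1 mul1r.
by rewrite opprD addrA addrK.
Qed.


Lemma eta_lin mu (x y z : R) (f1 f2 : S -> jact A -> R) : is_jpolicy mu ->
  Defs.eta (fun s a => x * f1 s a + y * f2 s a + z) pi mu =
  x * Defs.eta f1 pi mu + y * Defs.eta f2 pi mu + z.
Proof.
move=> hmu; have [q0 q1 qs] := hstat hmu.
rewrite /Defs.eta; under eq_bigr => s _.
  rewrite (_ : \sum_a jprob mu s a * (x * f1 s a + y * f2 s a + z) =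
     x * (\sum_a jprob mu s a * f1 s a) + y * (\sum_a jprob mu s a * f2 s a) + z); last first.
    apply/esym; rewrite -{1}[z]mulr1 -(sum_jprob hmu s) !mulr_sumr -!big_split /=.
    by apply: eq_bigr => a _; ring.
  rewrite !mulrDr !mulrA [pi mu s * x]mulrC [pi mu s * y]mulrC -!mulrA.
  over.
rewrite !big_split /= -!mulr_sumr -mulr_suml q1 mul1r.
done.
Qed.

Variables (r : S -> jact A -> R) (beta : R).

Lemma J_eq mu : is_jpolicy mu ->
  Jmv beta r pi mu = Defs.eta r pi mu - beta * Defs.eta (fun s a => r s a ^+ 2) pi mu
    + beta * (Defs.eta r pi mu) ^+ 2.
Proof.
move=> hmu; rewrite /Jmv.
set e := Defs.eta r pi mu.
have -> : zeta r pi mu = Defs.eta (fun s a => 1 * (r s a ^+ 2) + (- (2 * e)) * r s a + e ^+ 2) pi mu.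
  rewrite /zeta /Defs.eta -/e; apply: eq_bigr => s _; congr (_ * _); apply: eq_bigr => a _.
  by rewrite -/(Defs.eta r pi mu) -/e; congr (_ * _); ring.
rewrite (eta_lin _ _ _ (fun s a => r s a ^+ 2) r hmu) -/e mul1r.
by ring.
Qed.

Definition Dv (mus mu : jpol R S A) (Q : S -> jact A -> R) :=
  \sum_s pi mu s * \sum_a (jprob mu s a - jprob mus s a) * Q s a.

Lemma J_diff mus : is_jpolicy mus -> exists Qg Qr, forall mu, is_jpolicy mu ->
  Jmv beta r pi mu - Jmv beta r pi mus = Dv mus mu Qg + beta * (Dv mus mu Qr) ^+ 2.
Proof.
move=> hmus.
set es := Defs.eta r pi mus.
have [Qg hg] := perf_repr (fun s a => (1 + 2 * beta * es) * r s a + (- beta) * (r s a ^+ 2) + 0) hmus.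
have [Qr hr] := perf_repr r hmus.
exists Qg, Qr => mu hmu.
rewrite /Dv -(hg mu hmu) -(hr mu hmu) !eta_lin // !J_eq // -/es.
by ring.
Qed.


Variable mus : jpol R S A.
Hypothesis hmus : is_jpolicy mus.

Definition rho (i : 'I_N) s (a : jact A) := \prod_(j | j != i) mus j s (a j).
Definition pure (i : 'I_N) (c : A i) : {ffun A i -> R} := [ffun b => (b == c)%:R].
Definition devp (i : 'I_N) s (c : A i) : pol R S A i :=
  [ffun t => if t == s then pure c else mus i t].
Arguments devp i s c : clear implicits.

Lemma sum_pure (i : 'I_N) (c : A i) (F : A i -> R) : \sum_b pure c b * F b = F c.
Proof.
rewrite (bigD1 c) //= /pure ffunE eqxx mul1r big1 ?addr0 // => b hb.
by rewrite ffunE (negbTE hb) mul0r.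
Qed.

Lemma pure_pol (i : 'I_N) (c : A i) : (forall b, 0 <= pure c b) /\ \sum_b pure c b = 1.
Proof.
split; first by move=> b; rewrite ffunE ler0n.
by rewrite -(sum_pure c (fun _ => 1)); apply: eq_bigr => b _; rewrite mulr1.
Qed.

Lemma devp_pol i s c : is_policy (devp i s c).
Proof.
case: (hmus i) => h0 h1; have [p0 p1] := pure_pol c.
by split=> [t b|t]; rewrite /devp ffunE; case: (t == s) => //; rewrite ?ffunE.
Qed.

Lemma upd_pol i (m : pol R S A i) : is_policy m -> is_jpolicy (upd mus m).
Proof.
move=> hm j; rewrite /upd ffunE; case: dfwithP => // k hk.
Qed.

Lemma mix1_pol i (m : pol R S A i) (d : R) : is_policy m -> 0 <= d <= 1 ->
  is_policy (mix1 d (mus i) m).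
Proof.
move=> [m0 m1] /andP [d0 d1]; case: (hmus i) => h0 h1.
split=> [t b|t]; rewrite /mix1 ffunE.
  by rewrite ffunE addr_ge0 // mulr_ge0 // subr_ge0.
under eq_bigr do rewrite ffunE.
by rewrite big_split /= -!mulr_sumr h1 m1 !mulr1 subrK.
Qed.

Lemma jprob_upd i (m : pol R S A i) t a : jprob (upd mus m) t a = m t (a i) * rho i t a.
Proof.
rewrite /jprob (bigD1 i) //= /upd ffunE dfwith_in; congr (_ * _).
by apply: eq_bigr => j hj; rewrite ffunE dfwith_out // eq_sym.
Qed.

Lemma jprob_split i t a : jprob mus t a = mus i t (a i) * rho i t a.
Proof. by rewrite /jprob (bigD1 i). Qed.

Definition Lf i s (c : A i) (Q : S -> jact A -> R) :=
  \sum_(a : jact A) ((a i == c)%:R - mus i s (a i)) * rho i s a * Q s a.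
Arguments Lf i s c Q : clear implicits.

Lemma Dv_dev i s (c : A i) (d : R) Q :
  Dv mus (upd mus (mix1 d (mus i) (devp i s c))) Q =
  pi (upd mus (mix1 d (mus i) (devp i s c))) s * (d * Lf i s c Q).
Proof.
rewrite /Dv (bigD1 s) //= [X in _ + X]big1 ?addr0; last first.
  move=> t /negbTE ht; apply/eqP; rewrite mulf_eq0; apply/orP; right.
  apply/eqP; apply: big1 => a _.
  rewrite jprob_upd (jprob_split i) /mix1 /devp !ffunE ht.
  by ring.
congr (_ * _); rewrite /Lf mulr_sumr; apply: eq_bigr => a _.
rewrite jprob_upd (jprob_split i) /mix1 /devp !ffunE eqxx /pure ffunE.
by ring.
Qed.


Definition Wf i s (c : A i) (Q : S -> jact A -> R) :=
  \sum_(a : jact A) (a i == c)%:R * rho i s a * Q s a.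
Arguments Wf i s c Q : clear implicits.

Lemma Lf_W i s (c : A i) Q : Lf i s c Q = Wf i s c Q - \sum_b mus i s b * Wf i s b Q.
Proof.
rewrite /Lf /Wf; under eq_bigr do rewrite !mulrBl.
rewrite sumrB; congr (_ - _).
under [RHS]eq_bigr do rewrite mulr_sumr.
rewrite exchange_big /=; apply: eq_bigr => a _.
rewrite (bigD1 (a i)) //= eqxx mul1r big1 ?addr0 ?mulrA // => b hb.
by rewrite eq_sym (negbTE hb) !mul0r mulr0.
Qed.

Lemma NE_L Qg Qr : (forall mu, is_jpolicy mu ->
    Jmv beta r pi mu - Jmv beta r pi mus = Dv mus mu Qg + beta * (Dv mus mu Qr) ^+ 2) ->
  0 <= beta -> strict_local_NE beta r pi mus ->
  forall i s (c : A i), mus i s != pure c -> Lf i s c Qg < 0.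
Proof.
move=> hJ hb [db /andP [db0 db1] hNE] i s c hc.
have hm : is_policy (devp i s c) by apply: devp_pol.
have hne : devp i s c <> mus i.
  by move/ffunP => /(_ s); rewrite /devp ffunE eqxx => h; move: hc; rewrite h eqxx.
have := hNE db (ltac:(by rewrite db0 lexx)) i _ hm hne.
have hmu' : is_jpolicy (upd mus (mix1 db (mus i) (devp i s c))).
  by apply: upd_pol; apply: mix1_pol => //; rewrite ltW.
rewrite -subr_gt0 -opprB oppr_gt0 hJ // !Dv_dev.
set p := pi _ s.
have hp : 0 < p by apply: (stat_pos hmu' (herg hmu') (hstat hmu')).
move=> hlt; rewrite ltNge; apply/negP => hL.
have h0 : 0 <= p * (db * Lf i s c Qg) + beta * (p * (db * Lf i s c Qr)) ^+ 2.
  apply: addr_ge0; first by apply: mulr_ge0; [exact: ltW | apply: mulr_ge0 => //; exact: ltW].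
  by apply: mulr_ge0 => //; exact: sqr_ge0.
by move: hlt; rewrite ltNge h0.
Qed.

Lemma NE_pure Qg Qr : (forall mu, is_jpolicy mu ->
    Jmv beta r pi mu - Jmv beta r pi mus = Dv mus mu Qg + beta * (Dv mus mu Qr) ^+ 2) ->
  0 <= beta -> strict_local_NE beta r pi mus ->
  forall i s, exists b : A i, mus i s = pure b /\ forall c, c != b -> Wf i s c Qg < Wf i s b Qg.
Proof.
move=> hJ hb hNE i s.
have hL := NE_L hJ hb hNE.
case: (hmus i) => h0 h1.
have [c0 _] : exists c0 : A i, true.
  case: (pickP (@predT (A i))) => [c0 _|h]; first by exists c0.
  by move: (h1 s); rewrite big_pred0 // => /eqP; rewrite eq_sym oner_eq0.
pose W c := Wf i s c Qg.
pose ch := Order.arg_max c0 predT W.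
have hmax : forall c, W c <= W ch.
  by rewrite /ch; case: (@arg_maxP _ _ _ c0 predT W) => // m _ hm x; apply: hm.
have hbar : \sum_b mus i s b * W b <= W ch.
  rewrite -[W ch]mul1r -(h1 s) mulr_suml; apply: ler_sum => b _.
  by apply: ler_wpM2l.
have hpure : mus i s = pure ch.
  apply/eqP; apply: contraT => hne.
  have := hL i s ch hne; rewrite Lf_W -/(W ch) subr_lt0.
  by rewrite ltNge hbar.
exists ch; split => // c hc.
have hne : mus i s != pure c.
  rewrite hpure; apply/negP => /eqP /ffunP /(_ c); rewrite !ffunE eqxx (negbTE hc).
  by move/eqP; rewrite eq_sym oner_eq0.
have := hL i s c hne; rewrite Lf_W subr_lt0.
by rewrite hpure (sum_pure ch (fun b => Wf i s b Qg)).
Qed.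


Lemma prod_jprob (nu : jpol R S A) s (h : forall m, A m -> R) :
  \sum_a jprob nu s a * \prod_m h m (a m) = \prod_m \sum_c nu m s c * h m c.
Proof.
rewrite -(sum_prod_dffun (fun m c => nu m s c * h m c)).
by apply: eq_bigr => a _; rewrite /jprob big_split.
Qed.

Lemma pure_inj i (b c : A i) : pure b = pure c -> b = c.
Proof.
move/ffunP => /(_ b); rewrite !ffunE eqxx; case: eqP => // _ /eqP.
by rewrite oner_eq0.
Qed.

Section Pure.
Variable bs : S -> jact A.
Hypothesis hbs : forall i s, mus i s = pure (bs s i).

Lemma jprob_mus s a : jprob mus s a = (a == bs s)%:R.
Proof.
rewrite /jprob; under eq_bigr do rewrite hbs ffunE.
rewrite (@prod_ind R _ predT (fun i => a i == bs s i)) -dffun_eqE.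
by congr (_%:R); apply: eq_forallb => i.
Qed.

Lemma sum_ind_eq (b : jact A) (F : jact A -> R) : \sum_a (a == b)%:R * F a = F b.
Proof.
rewrite (bigD1 b) //= eqxx mul1r big1 ?addr0 // => a /negbTE ->.
by rewrite mul0r.
Qed.

Lemma sum_mus s (Q : S -> jact A -> R) : \sum_a jprob mus s a * Q s a = Q s (bs s).
Proof.
under eq_bigr do rewrite jprob_mus.
exact: (sum_ind_eq (bs s) (Q s)).
Qed.

Lemma W_at i s (a : jact A) Q : (forall j, j != i -> a j = bs s j) -> Wf i s (a i) Q = Q s a.
Proof.
move=> ha; rewrite /Wf -(sum_ind_eq a (Q s)); apply: eq_bigr => a' _.
congr (_ * _); rewrite /rho.
under eq_bigr do rewrite hbs ffunE.
rewrite (@prod_ind R _ (fun j => j != i) (fun j => a' j == bs s j)) -natrM mulnb.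
congr (_%:R); congr (nat_of_bool _); apply/andP/eqP => [[/eqP h1 /forallP h2]|->].
  apply/ffunP => k; case: (eqVneq k i) => [->//|hk].
  by move: (h2 k); rewrite hk /= => /eqP ->; rewrite ha.
split => //; apply/forallP => j; apply/implyP => hj; rewrite ha //.
Qed.

Lemma gap_from_NE Qg Qr : (forall mu, is_jpolicy mu ->
    Jmv beta r pi mu - Jmv beta r pi mus = Dv mus mu Qg + beta * (Dv mus mu Qr) ^+ 2) ->
  0 <= beta -> strict_local_NE beta r pi mus ->
  forall s (a : jact A) i, (forall j, j != i -> a j = bs s j) -> a i != bs s i ->
  Qg s a < Qg s (bs s).
Proof.
move=> hJ hb hNE s a i ha hai.
have [b' [hb' hgap]] := NE_pure hJ hb hNE i s.
have eb : bs s i = b' by apply: pure_inj; rewrite -hbs.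
rewrite -(W_at Qg ha) -(@W_at i s (bs s) Qg) // eb.
by apply: hgap; rewrite -eb.
Qed.


Definition ind s (a : jact A) k : R := (a k != bs s k)%:R.
Definition pk (nu : jpol R S A) s k := \sum_c nu k s c * ((c != bs s k)%:R : R).
Definition dd s (a : jact A) := \sum_k ind s a k.

Lemma pk_ge0 nu s k : is_jpolicy nu -> 0 <= pk nu s k.
Proof. by move=> hnu; apply: sumr_ge0 => c _; apply: mulr_ge0; [case: (hnu k)|rewrite ler0n]. Qed.

Lemma E1 nu s k : is_jpolicy nu -> \sum_a jprob nu s a * ind s a k = pk nu s k.
Proof.
move=> hnu.
transitivity (\sum_a jprob nu s a *
   \prod_m (if m == k then ((a m != bs s m)%:R : R) else 1)).
  by apply: eq_bigr => a _; rewrite (prod_if1 (fun m => ((a m != bs s m)%:R : R))).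
rewrite (prod_jprob nu s (fun m c => if m == k then ((c != bs s m)%:R : R) else 1)).
rewrite -(prod_if1 (fun m => pk nu s m) k); apply: eq_bigr => m _.
case: (eqVneq m k) => [->|hmk].
  by rewrite /pk.
by under eq_bigr do rewrite mulr1; case: (hnu m) => _ ->.
Qed.

Lemma E2 nu s k l : k != l -> is_jpolicy nu ->
  \sum_a jprob nu s a * (ind s a k * ind s a l) = pk nu s k * pk nu s l.
Proof.
move=> hkl hnu.
transitivity (\sum_a jprob nu s a *
   \prod_m ((if m == k then ((a m != bs s m)%:R : R) else 1) *
            (if m == l then ((a m != bs s m)%:R : R) else 1))).
  apply: eq_bigr => a _; rewrite big_split /=.
  by rewrite (prod_if1 (fun m => ((a m != bs s m)%:R : R))) (prod_if1 (fun m => ((a m != bs s m)%:R : R))).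
rewrite (prod_jprob nu s (fun m c => (if m == k then ((c != bs s m)%:R : R) else 1) *
            (if m == l then ((c != bs s m)%:R : R) else 1))).
rewrite -(prod_if1 (fun m => pk nu s m) k) -(prod_if1 (fun m => pk nu s m) l).
rewrite -big_split /=; apply: eq_bigr => m _.
case: (eqVneq m k) => [->|hmk].
  rewrite (negbTE hkl) mulr1 /pk; by under eq_bigr do rewrite mulr1.
case: (eqVneq m l) => [->|hml].
  rewrite mul1r /pk; by under eq_bigr do rewrite mul1r.
by rewrite mulr1; under eq_bigr do rewrite mulr1; case: (hnu m) => _ ->.
Qed.

Lemma Ed nu s : is_jpolicy nu -> \sum_a jprob nu s a * dd s a = \sum_k pk nu s k.
Proof.
move=> hnu; rewrite /dd; under eq_bigr do rewrite mulr_sumr.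
by rewrite exchange_big /=; apply: eq_bigr => k _; rewrite E1.
Qed.

Lemma ind2 s a k : ind s a k * ind s a k = ind s a k.
Proof. by rewrite /ind; case: (a k != bs s k); rewrite ?mulr1 ?mulr0. Qed.

Lemma ind_ge0 s a k : 0 <= ind s a k.
Proof. by rewrite /ind ler0n. Qed.

Lemma dd2 s a : dd s a ^+ 2 - dd s a = \sum_k \sum_(l | l != k) ind s a k * ind s a l.
Proof.
rewrite expr2 {1}/dd mulr_suml.
under eq_bigr => k _ do rewrite /dd mulr_sumr (bigD1 k) ?ind2 //.
rewrite big_split /= -/(dd s a) addrAC subrr add0r.
by apply: eq_bigr => k _; apply: eq_bigl => l.
Qed.

Lemma Ed2 nu s : is_jpolicy nu ->
  \sum_a jprob nu s a * (dd s a ^+ 2 - dd s a) <= (\sum_k pk nu s k) ^+ 2.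
Proof.
move=> hnu.
have -> : \sum_a jprob nu s a * (dd s a ^+ 2 - dd s a) =
    \sum_k \sum_(l | l != k) pk nu s k * pk nu s l.
  under eq_bigr do rewrite dd2 mulr_sumr.
  rewrite exchange_big /=; apply: eq_bigr => k _.
  under eq_bigr do rewrite mulr_sumr.
  rewrite exchange_big /=; apply: eq_bigr => l hl.
  by rewrite E2 // eq_sym.
rewrite expr2 mulr_suml; apply: ler_sum => k _.
rewrite mulr_sumr [X in _ <= X](bigD1 k) //=.
rewrite -[X in X <= _]add0r; apply: lerD; first by apply: mulr_ge0; apply: pk_ge0.
by apply: ler_sum => l hl.
Qed.

Lemma d_card s (a : jact A) : dd s a = (#|[pred k | a k != bs s k]|)%:R.
Proof.
apply/esym; rewrite -sum1_card natr_sum big_mkcond /=.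
by apply: eq_bigr => k _; rewrite /ind inE; case: (a k != bs s k).
Qed.

Lemma card0_b s (a : jact A) : #|[pred k | a k != bs s k]| = 0%N -> a = bs s.
Proof.
move/card0_eq => h; apply/ffunP => k; move: (h k); rewrite !inE.
by move/negbFE/eqP.
Qed.

Lemma card1_b s (a : jact A) : #|[pred k | a k != bs s k]| = 1%N ->
  exists i, (forall j, j != i -> a j = bs s j) /\ a i != bs s i.
Proof.
move/eqP/card1P => [i hi]; exists i; split.
  move=> j hj; move: (hi j); rewrite !inE (negbTE hj).
  by move/negbFE/eqP.
by move: (hi i); rewrite !inE eqxx.
Qed.

Lemma phi_bound s (a : jact A) (Q : S -> jact A -> R) (c0 K : R) : 0 <= c0 -> 0 <= K ->
  (forall a' : jact A, #|[pred k | a' k != bs s k]| = 1%N -> c0 <= Q s (bs s) - Q s a') ->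
  (forall a' : jact A, `|Q s a' - Q s (bs s)| <= K) ->
  Q s a - Q s (bs s) <= - c0 * dd s a + (K + c0) * (dd s a ^+ 2 - dd s a).
Proof.
move=> hc0 hK hgap hbd; rewrite d_card.
case hn: #|[pred k | a k != bs s k]| => [|[|n]].
- rewrite (card0_b hn) subrr mulr0n; lra.
- have := hgap a hn; rewrite expr1n; lra.
- have h2 : 2 <= (n.+2)%:R :> R by rewrite ler_nat.
  have h1 : Q s a - Q s (bs s) <= K by apply: le_trans (ler_norm _) (hbd a).
  set x := (n.+2)%:R in h2 *.
  rewrite expr2; nra.
Qed.

Lemma phir_bound s (a : jact A) (Q : S -> jact A -> R) (K : R) : 0 <= K ->
  (forall a' : jact A, `|Q s a' - Q s (bs s)| <= K) ->
  `|Q s a - Q s (bs s)| <= K * dd s a.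
Proof.
move=> hK hbd; rewrite d_card.
case hn: #|[pred k | a k != bs s k]| => [|n].
- by rewrite (card0_b hn) subrr normr0 mulr0n mulr0.
- have h2 : 1 <= (n.+1)%:R :> R by rewrite ler1n.
  have := hbd a; set x := (n.+1)%:R in h2 *; nra.
Qed.


Lemma mixj_pol mu (d : R) : is_jpolicy mu -> 0 <= d <= 1 -> is_jpolicy (mixj d mus mu).
Proof. by move=> hmu hd k; rewrite /mixj ffunE; apply: mix1_pol. Qed.

Definition eps (mu : jpol R S A) s k := \sum_c mu k s c * ((c != bs s k)%:R : R).

Lemma pk_mix mu (d : R) s k : pk (mixj d mus mu) s k = d * eps mu s k.
Proof.
rewrite /pk /eps mulr_sumr; apply: eq_bigr => c _.
rewrite /mixj /mix1 !ffunE hbs /pure ffunE.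
case: (c =P bs s k) => [->|_]; rewrite ?eqxx /= ?mulr0n ?mulr1n; ring.
Qed.

Lemma eps_ge0 mu s k : is_jpolicy mu -> 0 <= eps mu s k.
Proof. by move=> hmu; apply: sumr_ge0 => c _; apply: mulr_ge0; [case: (hmu k)|rewrite ler0n]. Qed.

Lemma eps_le1 mu s k : is_jpolicy mu -> eps mu s k <= 1.
Proof.
move=> hmu; case: (hmu k) => h0 h1; rewrite -(h1 s); apply: ler_sum => c _.
by case: (c != bs s k); rewrite ?mulr1 ?mulr0 //.
Qed.

Lemma Dv_mix (Q : S -> jact A -> R) mu (d : R) : is_jpolicy mu -> 0 <= d <= 1 ->
  Dv mus (mixj d mus mu) Q =
  \sum_s pi (mixj d mus mu) s * \sum_a jprob (mixj d mus mu) s a * (Q s a - Q s (bs s)).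
Proof.
move=> hmu hd; have hnu := mixj_pol hmu hd.
rewrite /Dv; apply: eq_bigr => s _; congr (_ * _).
under eq_bigr do rewrite mulrBl.
rewrite sumrB sum_mus.
under [RHS]eq_bigr do rewrite mulrBr.
by rewrite sumrB -mulr_suml sum_jprob // mul1r.
Qed.

Lemma eps_pos mu : is_jpolicy mu -> mu <> mus -> exists s k, 0 < eps mu s k.
Proof.
move=> hmu hne.
case: (boolP [exists k, [exists s, mu k s != mus k s]]) => [/existsP [k /existsP [s hks]]|hall].
  exists s, k; rewrite lt_def eps_ge0 // andbT; apply: contraNneq hks => he.
  case: (hmu k) => h0 h1.
  have hz : forall c, c != bs s k -> mu k s c = 0.
    move=> c hc; have := psumr_eq0P (fun c _ => mulr_ge0 (h0 s c) (ler0n _ (c != bs s k))) he.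
    by move=> /(_ c isT) /eqP; rewrite hc mulr1 => /eqP.
  have h1b : mu k s (bs s k) = 1.
    rewrite -(h1 s) (bigD1 (bs s k)) //= big1 ?addr0 // => c hc; exact: hz.
  apply/eqP/ffunP => c; rewrite hbs /pure ffunE.
  case: (eqVneq c (bs s k)) => [->|hc]; first by rewrite h1b.
  by rewrite hz.
exfalso; apply: hne; apply/ffunP => k; apply/ffunP => s.
apply/eqP; apply: contraNT hall => h; apply/existsP; exists k; apply/existsP; exists s; exact: h.
Qed.


Lemma joint Qg Qr : (forall mu, is_jpolicy mu ->
    Jmv beta r pi mu - Jmv beta r pi mus = Dv mus mu Qg + beta * (Dv mus mu Qr) ^+ 2) ->
  0 <= beta -> forall c0 K Kr : R, 0 < c0 -> 0 <= K -> 0 <= Kr ->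
  (forall s (a' : jact A), #|[pred k | a' k != bs s k]| = 1%N -> c0 <= Qg s (bs s) - Qg s a') ->
  (forall s (a' : jact A), `|Qg s a' - Qg s (bs s)| <= K) ->
  (forall s (a' : jact A), `|Qr s a' - Qr s (bs s)| <= Kr) ->
  forall mu (d : R), is_jpolicy mu -> mu <> mus -> 0 < d ->
  d * (c0 + N%:R * (K + c0 + beta * Kr ^+ 2)) <= c0 ->
  Jmv beta r pi (mixj d mus mu) < Jmv beta r pi mus.
Proof.
move=> hJ hb c0 K Kr hc0 hK hKr hgap hbd hbdr mu d hmu hne hd0 hdM.
set M := N%:R * (K + c0 + beta * Kr ^+ 2) in hdM *.
have hkr : 0 <= beta * Kr ^+ 2 by apply: mulr_ge0 => //; exact: sqr_ge0.
have hM : 0 <= M by rewrite /M; apply: mulr_ge0; [rewrite ler0n| lra].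
have hd1 : d <= 1.
  have hdm := mulr_ge0 (ltW hd0) hM.
  rewrite mulrDr in hdM.
  rewrite leNgt; apply/negP => hgt.
  have : c0 < d * c0 by rewrite -{1}[c0]mul1r ltr_pM2r.
  lra.
have hd : 0 <= d <= 1 by rewrite ltW.
have hnu := mixj_pol hmu hd.
rewrite -subr_lt0 hJ // !Dv_mix //.
set nu := mixj d mus mu.
set p := pi nu.
have hp : forall s, 0 < p s by apply: (stat_pos hnu (herg hnu) (hstat hnu)).
have [p0 p1 _] := hstat hnu.
pose E s := \sum_k eps mu s k.
have E0 : forall s, 0 <= E s by move=> s; apply: sumr_ge0 => k _; exact: eps_ge0.
have EN : forall s, E s <= N%:R.
  move=> s; rewrite -[N]card_ord -sumr_const; apply: ler_sum => k _; exact: eps_le1.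
have hpk : forall s, \sum_k pk nu s k = d * E s.
  by move=> s; rewrite mulr_sumr; apply: eq_bigr => k _; rewrite pk_mix.
have Fg : forall s, \sum_a jprob nu s a * (Qg s a - Qg s (bs s)) <=
    d * E s * (- c0 + (K + c0) * d * N%:R).
  move=> s.
  apply: le_trans (_ : \sum_a jprob nu s a * (- c0 * dd s a + (K + c0) * (dd s a ^+ 2 - dd s a)) <= _).
    apply: ler_sum => a _; apply: ler_wpM2l; first exact: jprob_ge0.
    by apply: phi_bound => //; [exact: ltW| exact: hgap].
  under eq_bigr do rewrite mulrDr mulrCA [jprob nu s _ * ((K + c0) * _)]mulrCA.
  rewrite big_split /= -!mulr_sumr Ed // hpk.
  have := Ed2 s hnu; rewrite hpk => h2.
  have := EN s; have := E0 s => he0 heN.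
  have hKc : 0 <= K + c0 by lra.
  apply: le_trans (_ : - c0 * (d * E s) + (K + c0) * (d * E s * (d * N%:R)) <= _); last first.
    by rewrite le_eqVlt; apply/orP; left; apply/eqP; ring.
  rewrite lerD2l; apply: ler_wpM2l => //; apply: le_trans h2 _.
  rewrite expr2; apply: ler_wpM2l; first by apply: mulr_ge0 => //; exact: ltW.
  by apply: ler_wpM2l => //; exact: ltW.
have Fr : forall s, `|\sum_a jprob nu s a * (Qr s a - Qr s (bs s))| <= Kr * (d * E s).
  move=> s; apply: le_trans (ler_norm_sum _ _ _) _.
  rewrite -hpk -Ed // mulr_sumr; apply: ler_sum => a _.
  rewrite normrM ger0_norm ?jprob_ge0 // mulrCA; apply: ler_wpM2l; first exact: jprob_ge0.
  exact: phir_bound.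
set X := \sum_s p s * E s.
have X0 : 0 < X.
  have [s [k hk]] := eps_pos hmu hne.
  rewrite /X (bigD1 s) //=; apply: ltr_pwDl; last by apply: sumr_ge0 => t _; apply: mulr_ge0; [exact: ltW|].
  apply: mulr_gt0 => //; rewrite /E (bigD1 k) //=; apply: ltr_pwDl => //.
  by apply: sumr_ge0 => l _; exact: eps_ge0.
have XN : X <= N%:R.
  apply: le_trans (_ : X <= \sum_s p s * N%:R) _.
    apply: ler_sum => s _; apply: ler_wpM2l; [exact: ltW| exact: EN].
  by rewrite -mulr_suml p1 mul1r.
have T1 : \sum_s p s * \sum_a jprob nu s a * (Qg s a - Qg s (bs s)) <=
    d * X * (- c0 + (K + c0) * d * N%:R).
  apply: le_trans (_ : \sum_s p s * (d * E s * (- c0 + (K + c0) * d * N%:R)) <= _).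
    by apply: ler_sum => s _; apply: ler_wpM2l; [exact: ltW| exact: Fg].
  rewrite /X mulr_sumr mulr_suml le_eqVlt; apply/orP; left; apply/eqP.
  by apply: eq_bigr => s _; ring.
have T2 : `|\sum_s p s * \sum_a jprob nu s a * (Qr s a - Qr s (bs s))| <= Kr * (d * X).
  apply: le_trans (ler_norm_sum _ _ _) _.
  apply: le_trans (_ : \sum_s p s * (Kr * (d * E s)) <= _).
    apply: ler_sum => s _; rewrite normrM gtr0_norm //; apply: ler_wpM2l; [exact: ltW| exact: Fr].
  rewrite /X !mulr_sumr le_eqVlt; apply/orP; left; apply/eqP.
  by apply: eq_bigr => s _; ring.
set Y := \sum_s p s * \sum_a jprob nu s a * (Qr s a - Qr s (bs s)) in T2 *.
set Z := \sum_s p s * \sum_a jprob nu s a * (Qg s a - Qg s (bs s)) in T1 *.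
have T3 : Y ^+ 2 <= (Kr * (d * X)) ^+ 2.
  rewrite -real_normK ?num_real //; apply: lerXn2r => //; rewrite ?nnegrE ?normr_ge0 //.
  by apply: mulr_ge0 => //; apply: mulr_ge0 => //; [exact: ltW|exact: ltW].
have T4 : beta * Y ^+ 2 <= beta * (Kr ^+ 2 * d ^+ 2 * X * N%:R).
  apply: ler_wpM2l => //; apply: le_trans T3 _.
  rewrite exprMn exprMn expr2 expr2 expr2.
  have hkr2 : 0 <= Kr * Kr by nra.
  nra.
have hneg : - c0 + d * M < 0.
  have := mulr_gt0 hd0 hc0; move: hdM; rewrite mulrDr; lra.
have hY : d * X * (- c0 + d * M) < 0 by rewrite pmulr_rlt0 //; apply: mulr_gt0.
have : Z + beta * Y ^+ 2 <= d * X * (- c0 + d * M).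
  apply: le_trans (lerD T1 T4) _; rewrite le_eqVlt; apply/orP; left; apply/eqP.
  rewrite /M; ring.
lra.
Qed.

End Pure.

Lemma le_sum2 (F : S -> jact A -> R) s a : (forall s a, 0 <= F s a) ->
  F s a <= \sum_s' \sum_a' F s' a'.
Proof.
move=> hF; rewrite (bigD1 s) //= (bigD1 a) //= -addrA lerDl.
apply: addr_ge0; apply: sumr_ge0 => *; [exact: hF| apply: sumr_ge0 => *; exact: hF].
Qed.

Lemma mix_upd (d : R) i (m : pol R S A i) :
  mixj d mus (upd mus m) = upd mus (mix1 d (mus i) m).
Proof.
apply/ffunP => j; rewrite /mixj /upd !ffunE.
case: (eqVneq i j) => [<-|hij]; first by rewrite !dfwith_in.
rewrite !dfwith_out //; apply/ffunP => s; apply/ffunP => b; rewrite /mix1 !ffunE.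
ring.
Qed.

Lemma main_iff : 0 <= beta ->
  (strict_local_NE beta r pi mus <-> strict_local_max beta r pi mus).
Proof.
move=> hb; split; last first.
  move=> [db hdb hmax]; exists db => // d hd i m hm hne.
  have hmu := upd_pol hm.
  have hne' : upd mus m <> mus.
    by move/ffunP => /(_ i); rewrite /upd ffunE dfwith_in.
  by have := hmax d hd _ hmu hne'; rewrite mix_upd.
move=> hNE.
have [Qg [Qr hJ]] := J_diff hmus.
have hex : forall i s, exists b : A i, mus i s == pure b.
  move=> i s; have [b [hb' _]] := NE_pure hJ hb hNE i s; by exists b; apply/eqP.
pose bs (s : S) : jact A := [ffun i => xchoose (hex i s)].
have hbs : forall i s, mus i s = pure (bs s i).
  by move=> i s; rewrite /bs ffunE; apply/eqP; exact: (xchooseP (hex i s)).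
have hgap := gap_from_NE hbs hJ hb hNE.
pose sg (x : S * jact A) := #|[pred k | x.2 k != bs x.1 k]| == 1%N.
pose c0 := \big[Order.min/1]_(x | sg x) (Qg x.1 (bs x.1) - Qg x.1 x.2).
have hc0 : 0 < c0.
  rewrite /c0; apply: (big_ind (fun y => 0 < y)) => //.
    by move=> x y hx hy; rewrite lt_min hx hy.
  move=> [s a] /eqP /= /card1_b [i [h1 h2]]; rewrite subr_gt0.
  exact: hgap h1 h2.
have hg : forall s (a' : jact A), #|[pred k | a' k != bs s k]| = 1%N ->
    c0 <= Qg s (bs s) - Qg s a'.
  move=> s a' h1; rewrite /c0 (bigD1 (s, a')) /=; last by rewrite /sg /= h1.
  by rewrite ge_min lexx.
pose K := \sum_s \sum_(a : jact A) `|Qg s a - Qg s (bs s)|.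
pose Kr := \sum_s \sum_(a : jact A) `|Qr s a - Qr s (bs s)|.
have hK : 0 <= K by apply: sumr_ge0 => *; apply: sumr_ge0 => *.
have hKr : 0 <= Kr by apply: sumr_ge0 => *; apply: sumr_ge0 => *.
have hbd : forall s (a' : jact A), `|Qg s a' - Qg s (bs s)| <= K.
  move=> s a'; have := @le_sum2 (fun s a => `|Qg s a - Qg s (bs s)|) s a'.
  by apply => *; exact: normr_ge0.
have hbdr : forall s (a' : jact A), `|Qr s a' - Qr s (bs s)| <= Kr.
  move=> s a'; have := @le_sum2 (fun s a => `|Qr s a - Qr s (bs s)|) s a'.
  by apply => *; exact: normr_ge0.
set M := N%:R * (K + c0 + beta * Kr ^+ 2).
have hkr : 0 <= beta * Kr ^+ 2 by apply: mulr_ge0 => //; exact: sqr_ge0.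
have hM : 0 <= M by rewrite /M; apply: mulr_ge0; [rewrite ler0n| lra].
have hcM : 0 < c0 + M by lra.
exists (c0 / (c0 + M)).
  rewrite divr_gt0 //= ler_pdivrMr // mul1r; lra.
move=> d /andP [hd0 hd] mu hmu hne.
apply: (joint hbs hJ hb hc0 hK hKr hg hbd hbdr hmu hne hd0).
by move: hd; rewrite ler_pdivlMr.
Qed.

End Basics.

Theorem theorem5 (R : realFieldType) (N : nat) (S : finType) (A : 'I_N -> finType)
    (P : S -> jact A -> S -> R) (r : S -> jact A -> R) (beta : R)
    (pi : jpol R S A -> S -> R) (mus : jpol R S A) :
  is_kernel P ->
  (forall mu : jpol R S A, is_jpolicy mu -> ergodic P mu) ->
  (forall mu : jpol R S A, is_jpolicy mu -> is_stationary P mu (pi mu)) ->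
  0 <= beta ->
  is_jpolicy mus ->
  (strict_local_NE beta r pi mus <-> strict_local_max beta r pi mus).
Proof.
move=> HP herg hstat hb hmus.
exact: (main_iff HP herg hstat r hmus hb).
Qed.
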